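(* Let $P,Q$ be coprime non-zero integers with $\Delta:=P^2-4Q>0$, let $(U_n)_{n\geq0}$ be the Lucas sequence $U(P,Q)$, and let $\alpha$ be the root of $X^2-PX+Q=0$ of largest absolute value. Then for every positive integer $n$, \[|\alpha|^{\frac{n^2}{4}-\frac{n}{2}-1}\leq \mathrm{lcm}(U_1,U_2,\dots,U_n)\leq |\alpha|^{\frac{n^2}{3}+\frac{7n}{3}-\frac{8}{3}}.\]
   Context: For non-zero integers $P,Q$, the Lucas sequence $U(P,Q)=(U_n)_{n\geq0}$ is defined by $U_0=0$, $U_1=1$, $U_{n+2}=PU_{n+1}-QU_n$ for $n\geq0$. When $\Delta=P^2-4Q>0$, the roots $\alpha,\beta$ of $X^2-PX+Q=0$ are real and labelled so that $|\alpha|>|\beta|$. $\mathrm{lcm}$ denotes the least common positive multiple (of the integers $U_1,\dots,U_n$, which are non-zero under these hypotheses). *)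

(* Defs.v *)
From Stdlib Require Import Reals ZArith.
Open Scope Z_scope.

(* Lucas sequence U(P,Q): U_0 = 0, U_1 = 1, U_{n+2} = P U_{n+1} - Q U_n. *)
Fixpoint lucas_pair (P Q : Z) (n : nat) : Z * Z :=
  match n with
  | O => (0, 1)
  | S m => let (a, b) := lucas_pair P Q m in (b, P * b - Q * a)
  end.

Definition lucasU (P Q : Z) (n : nat) : Z := fst (lucas_pair P Q n).

Fixpoint lcm_lucas (P Q : Z) (n : nat) : Z :=
  match n with
  | O => 1
  | S m => Z.lcm (lcm_lucas P Q m) (lucasU P Q (S m))
  end.

(* Main.v *)
Require Import Defs.
From Stdlib Require Import Reals ZArith Lia Lra Psatz Zify ZifyNat ZifyClasses List.
Open Scope bool_scope.
Open Scope R_scope.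

Lemma Zlcm_gcd (a b : Z) : (Z.lcm a b * Z.gcd a b = Z.abs (a * b))%Z.
Proof.
  destruct (Z.eq_dec (Z.gcd a b) 0) as [H|H].
  - apply Z.gcd_eq_0 in H as [-> ->]. reflexivity.
  - unfold Z.lcm. rewrite <- (Z.abs_eq (Z.gcd a b)) at 2 by apply Z.gcd_nonneg.
    rewrite <- Z.abs_mul. f_equal.
    rewrite <- Z.mul_assoc. f_equal. rewrite Z.mul_comm.
    symmetry. apply Z.div_exact; [exact H|].
    apply Z.mod_divide; [exact H| apply Z.gcd_divide_r].
Qed.

Lemma Zmul_divide_mono (a b c d : Z) : (a | b)%Z -> (c | d)%Z -> (a * c | b * d)%Z.
Proof. intros [x ->] [y ->]. exists (x*y)%Z. ring. Qed.

Lemma Zgcd_lcm_distr (a b c : Z) :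
  (Z.gcd (Z.lcm a b) c | Z.lcm (Z.gcd a c) (Z.gcd b c))%Z.
Proof.
  set (u := Z.gcd a c). set (v := Z.gcd b c). set (g := Z.gcd (Z.lcm a b) c).
  set (d := Z.gcd u v).
  assert (Hu0 : (0 <= u)%Z) by apply Z.gcd_nonneg.
  assert (Hv0 : (0 <= v)%Z) by apply Z.gcd_nonneg.
  assert (Hdu : (d | u)%Z) by apply Z.gcd_divide_l.
  assert (Hdv : (d | v)%Z) by apply Z.gcd_divide_r.
  assert (Hda : (d | a)%Z) by (eapply Z.divide_trans; [exact Hdu| apply Z.gcd_divide_l]).
  assert (Hdc : (d | c)%Z) by (eapply Z.divide_trans; [exact Hdu| apply Z.gcd_divide_r]).
  assert (Hdb : (d | b)%Z) by (eapply Z.divide_trans; [exact Hdv| apply Z.gcd_divide_l]).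
  assert (Hgl : (g | Z.lcm a b)%Z) by apply Z.gcd_divide_l.
  assert (Hgc : (g | c)%Z) by apply Z.gcd_divide_r.
  destruct (Z.eq_dec d 0) as [Hd0|Hd0].
  - apply Z.gcd_eq_0 in Hd0 as [Hu Hv]. rewrite Hu, Hv. cbn. apply Z.divide_0_r.
  - apply (Z.mul_divide_cancel_r _ _ d Hd0).
    unfold d. rewrite Zlcm_gcd. rewrite Z.abs_eq by lia.
    assert (Hab : (g * d | a * b)%Z).
    { apply Z.divide_abs_r. rewrite <- Zlcm_gcd. apply Zmul_divide_mono; [exact Hgl|].
      apply Z.gcd_greatest; assumption. }
    assert (Hac : (g * d | a * c)%Z).
    { rewrite (Z.mul_comm a c). apply Zmul_divide_mono; assumption. }
    assert (Hbc : (g * d | b * c)%Z).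
    { rewrite (Z.mul_comm b c). apply Zmul_divide_mono; assumption. }
    assert (Hcc : (g * d | c * c)%Z).
    { apply Zmul_divide_mono; assumption. }
    assert (Hav : (g * d | a * v)%Z).
    { apply Z.divide_abs_r. rewrite Z.abs_mul, (Z.abs_eq v) by lia.
      unfold v. rewrite <- Z.gcd_mul_mono_l. apply Z.gcd_greatest; assumption. }
    assert (Hcv : (g * d | c * v)%Z).
    { apply Z.divide_abs_r. rewrite Z.abs_mul, (Z.abs_eq v) by lia.
      unfold v. rewrite <- Z.gcd_mul_mono_l. apply Z.gcd_greatest.
      - rewrite (Z.mul_comm c b). exact Hbc.
      - exact Hcc. }
    unfold u. rewrite <- Z.gcd_mul_mono_r_nonneg by exact Hv0.
    apply Z.gcd_greatest; assumption.
Qed.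

Lemma luc_snd (P Q : Z) n : snd (lucas_pair P Q n) = lucasU P Q (S n).
Proof. unfold lucasU. simpl. destruct (lucas_pair P Q n). reflexivity. Qed.

Lemma luc0 P Q : lucasU P Q 0 = 0%Z. Proof. reflexivity. Qed.
Lemma luc1 P Q : lucasU P Q 1 = 1%Z. Proof. reflexivity. Qed.

Lemma luc_rec P Q n :
  lucasU P Q (S (S n)) = (P * lucasU P Q (S n) - Q * lucasU P Q n)%Z.
Proof.
  unfold lucasU at 1. simpl. rewrite <- (luc_snd P Q n).
  unfold lucasU. destruct (lucas_pair P Q n). reflexivity.
Qed.

Section RealSetup.
Variables (P Q : Z) (alpha : R).
Hypothesis halpha : alpha * alpha - IZR P * alpha + IZR Q = 0.
Hypothesis hlargest : Rabs alpha > Rabs (IZR P - alpha).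

Definition beta := IZR P - alpha.
Definition u (n : nat) := (alpha ^ n - beta ^ n) / (alpha - beta).

Lemma sumab : alpha + beta = IZR P. Proof. unfold beta; ring. Qed.
Lemma prodab : alpha * beta = IZR Q. Proof. unfold beta; nra. Qed.
Lemma ab_neq : alpha - beta <> 0.
Proof. intro H. assert (alpha = beta) by lra. fold beta in hlargest. rewrite H0 in hlargest. lra. Qed.

Lemma u_rec n : u (S (S n)) = IZR P * u (S n) - IZR Q * u n.
Proof.
  rewrite <- sumab, <- prodab. unfold u. simpl. field. apply ab_neq.
Qed.

Lemma IZR_luc m : IZR (lucasU P Q m) = u m.
Proof.
  assert (H : forall n, IZR (lucasU P Q n) = u n /\ IZR (lucasU P Q (S n)) = u (S n)).
  { induction n as [|n IH].
    - split; [rewrite luc0| rewrite luc1]; unfold u; simpl; [field|field]; apply ab_neq.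
    - destruct IH as [H1 H2]. split; [exact H2|].
      rewrite luc_rec, minus_IZR, !mult_IZR, H1, H2. symmetry. apply u_rec. }
  apply H.
Qed.

End RealSetup.

Open Scope Z_scope.
Lemma gcd1_of (a b : Z) : (forall x, (x | a) -> (x | b) -> (x | 1)) -> Z.gcd a b = 1.
Proof.
  intros H. assert (Hd : (Z.gcd a b | 1)) by (apply H; [apply Z.gcd_divide_l|apply Z.gcd_divide_r]).
  apply Z.divide_1_r_nonneg in Hd; [exact Hd| apply Z.gcd_nonneg].
Qed.

Lemma coprime_div (x a b : Z) : Z.gcd a b = 1 -> (x | a) -> Z.gcd x b = 1.
Proof.
  intros H Hx. apply gcd1_of. intros y Hy1 Hy2. rewrite <- H.
  apply Z.gcd_greatest; [exact (Z.divide_trans _ _ _ Hy1 Hx)| exact Hy2].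
Qed.

Section ZLucas.
Variables P Q : Z.
Hypothesis hcop : Z.gcd P Q = 1.
Notation U := (lucasU P Q).

Lemma U_add b c0 : U (S b + c0) = U (S b) * U (S c0) - Q * U b * U c0.
Proof.
  assert (H : forall c, U (S b + c) = U (S b) * U (S c) - Q * U b * U c /\
                        U (S b + S c) = U (S b) * U (S (S c)) - Q * U b * U (S c)).
  { induction c as [|c IH].
    - rewrite Nat.add_0_r, luc0, luc1. split; [ring|].
      replace (S b + 1)%nat with (S (S b)) by lia. rewrite luc_rec, luc_rec, luc1, luc0. ring.
    - destruct IH as [H1 H2]. split; [exact H2|].
      replace (S b + S (S c))%nat with (S (S (b + S c)))%nat by lia.
      rewrite luc_rec. replace (S (b + S c)) with (S b + S c)%nat by lia.
      replace (b + S c)%nat with (S b + c)%nat by lia.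
      rewrite H1, H2. rewrite (luc_rec P Q (S c)), (luc_rec P Q c). ring. }
  apply H.
Qed.

Lemma U_Q_coprime n : Z.gcd (U (S n)) Q = 1.
Proof.
  induction n as [|n IH].
  - rewrite luc1. apply Z.gcd_1_l.
  - apply gcd1_of. intros x Hx HxQ.
    rewrite luc_rec in Hx.
    assert (HxP : (x | P * U (S n))).
    { replace (P * U (S n)) with ((P * U (S n) - Q * U n) + Q * U n) by ring.
      apply Z.divide_add_r; [exact Hx| apply Z.divide_mul_l; exact HxQ]. }
    apply Z.gauss in HxP.
    + rewrite <- IH. apply Z.gcd_greatest; assumption.
    + apply (coprime_div x Q P); [rewrite Z.gcd_comm; exact hcop| exact HxQ].
Qed.

Lemma U_consec n : Z.gcd (U n) (U (S n)) = 1.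
Proof.
  induction n as [|n IH].
  - rewrite luc1. apply Z.gcd_1_r.
  - apply gcd1_of. intros x H1 H2. rewrite luc_rec in H2.
    assert (HxQ : (x | Q * U n)).
    { replace (Q * U n) with (P * U (S n) - (P * U (S n) - Q * U n)) by ring.
      apply Z.divide_sub_r; [apply Z.divide_mul_r; exact H1| exact H2]. }
    apply Z.gauss in HxQ.
    + rewrite <- IH. apply Z.gcd_greatest; assumption.
    + apply (coprime_div x (U (S n)) Q); [apply U_Q_coprime| exact H1].
Qed.

Lemma U_strong : forall a b x, (x | U a) -> (x | U b) -> (x | U (Nat.gcd a b)).
Proof.
  intros a b. remember (a + b)%nat as s eqn:Hs. revert a b Hs.
  induction s as [s IH] using (well_founded_induction lt_wf).
  intros a b Hs x Ha Hb.
  destruct (Nat.le_ge_cases a b) as [Hab|Hab].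
  - destruct a as [|a'].
    + simpl. exact Hb.
    + destruct (Nat.le_exists_sub (S a') b Hab) as [c [Hc _]].
      subst b. rewrite Nat.add_comm in Hb. rewrite U_add in Hb.
      assert (H1 : (x | Q * U a' * U c)).
      { replace (Q * U a' * U c) with (U (S a') * U (S c) - (U (S a') * U (S c) - Q * U a' * U c)) by ring.
        apply Z.divide_sub_r; [apply Z.divide_mul_l; exact Ha| exact Hb]. }
      rewrite <- Z.mul_assoc in H1.
      apply Z.gauss in H1; [| apply (coprime_div x (U (S a')) Q); [apply U_Q_coprime|exact Ha]].
      apply Z.gauss in H1; [| apply (coprime_div x (U (S a')) (U a')); [rewrite Z.gcd_comm; apply U_consec|exact Ha]].
      replace (Nat.gcd (S a') (c + S a')) with (Nat.gcd (S a') c) by (symmetry; apply Nat.gcd_add_diag_r).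
      apply (IH (S a' + c)%nat); [lia| reflexivity| exact Ha| exact H1].
  - rewrite Nat.gcd_comm.
    destruct b as [|b'].
    + simpl. exact Ha.
    + destruct (Nat.le_exists_sub (S b') a Hab) as [c [Hc _]].
      subst a. rewrite Nat.add_comm in Ha. rewrite U_add in Ha.
      assert (H1 : (x | Q * U b' * U c)).
      { replace (Q * U b' * U c) with (U (S b') * U (S c) - (U (S b') * U (S c) - Q * U b' * U c)) by ring.
        apply Z.divide_sub_r; [apply Z.divide_mul_l; exact Hb| exact Ha]. }
      rewrite <- Z.mul_assoc in H1.
      apply Z.gauss in H1; [| apply (coprime_div x (U (S b')) Q); [apply U_Q_coprime|exact Hb]].
      apply Z.gauss in H1; [| apply (coprime_div x (U (S b')) (U b')); [rewrite Z.gcd_comm; apply U_consec|exact Hb]].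
      replace (Nat.gcd (S b') (c + S b')) with (Nat.gcd (S b') c) by (symmetry; apply Nat.gcd_add_diag_r).
      apply (IH (S b' + c)%nat); [lia| reflexivity| exact Hb| exact H1].
Qed.

End ZLucas.

Lemma U_div_mult P Q d k : (lucasU P Q d | lucasU P Q (k * d)).
Proof.
  destruct d as [|d'].
  - rewrite Nat.mul_0_r. apply Z.divide_refl.
  - induction k as [|k IH].
    + simpl. apply Z.divide_0_r.
    + replace (S k * S d')%nat with (S d' + k * S d')%nat by lia.
      rewrite U_add. apply Z.divide_sub_r.
      * apply Z.divide_mul_l, Z.divide_refl.
      * apply Z.divide_mul_r, IH.
Qed.

Open Scope R_scope.

Lemma L_succ P Q n : lcm_lucas P Q (S n) = Z.lcm (lcm_lucas P Q n) (lucasU P Q (S n)).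
Proof. reflexivity. Qed.

Lemma L_nonneg P Q n : (0 <= lcm_lucas P Q n)%Z.
Proof. destruct n; simpl; [lia| apply Z.lcm_nonneg]. Qed.

Lemma U_div_L P Q d j : (1 <= d)%nat -> (d <= j)%nat -> (lucasU P Q d | lcm_lucas P Q j)%Z.
Proof.
  intros H1 H2. induction j as [|j IH]; [lia|].
  rewrite L_succ. destruct (Nat.eq_dec d (S j)) as [->|Hne].
  - apply Z.divide_lcm_r.
  - eapply Z.divide_trans; [apply IH; lia| apply Z.divide_lcm_l].
Qed.


Definition tt (k : nat) : nat :=
  if Nat.eqb k 1 then 0%nat else
  match (k mod 6)%nat with
  | 1%nat | 5%nat => (6 * k)%nat
  | 2%nat | 4%nat => (3 * k + 9)%nat
  | 3%nat => (4 * k + 14)%nat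
  | _ => (2 * k + 14)%nat
  end.

Definition inS (q : nat) : bool :=
  Nat.eqb q 2 || Nat.eqb q 3 || (Nat.leb 5 q && (Nat.eqb (q mod 6) 1 || Nat.eqb (q mod 6) 5)).

Section Ident.
Variables (P : Z) (alpha : R).
Hypothesis hne : alpha - beta P alpha <> 0.
Notation be := (beta P alpha).
Notation uu := (u P alpha).

Lemma u2 m : uu (m + m) = uu m * (alpha ^ m + be ^ m).
Proof. unfold u. rewrite !pow_add. field. exact hne. Qed.
Lemma u3 m : uu (m + m + m) = uu m * (alpha ^ m * alpha ^ m + alpha ^ m * be ^ m + be ^ m * be ^ m).
Proof. unfold u. rewrite !pow_add. field. exact hne. Qed.
Lemma u6 m : uu (m + m + m + m + m + m) * uu m =
  uu (m + m) * uu (m + m + m) * (alpha ^ m * alpha ^ m - alpha ^ m * be ^ m + be ^ m * be ^ m).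
Proof. unfold u. rewrite !pow_add. field. exact hne. Qed.
End Ident.


Open Scope nat_scope.
Fixpoint Gs (n : nat) : nat := match n with O => O | S n' => Gs n' + tt (S n') end.
Definition Ed (n : nat) : nat :=
  match n mod 6 with
  | 1 => 20 * (n / 6) | 2 => 26 * (n/6) + 5 | 3 => 26 * (n/6) + 3
  | 4 => 32 * (n/6) + 10 | 5 => 20 * (n/6) + 12 | _ => 32 * (n/6) - 10 end.
Lemma Gs_exact n : 1 <= n -> Gs n + 16 + Ed n = 2 * n * n + 14 * n.
Proof.
  induction n as [|n IH]; intros Hn; [lia|].
  destruct (Nat.eq_dec n 0) as [->|Hn0]; [reflexivity|].
  specialize (IH ltac:(lia)). simpl Gs. unfold tt, Ed in *.
  destruct (Nat.eqb_spec (S n) 1); [lia|].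
  assert (Hc : n mod 6 = 0 \/ n mod 6 = 1 \/ n mod 6 = 2 \/ n mod 6 = 3 \/ n mod 6 = 4 \/ n mod 6 = 5) by (clear IH; lia).
  destruct Hc as [H|[H|[H|[H|[H|H]]]]];
  [ assert (H' : S n mod 6 = 1) by lia
  | assert (H' : S n mod 6 = 2) by lia
  | assert (H' : S n mod 6 = 3) by lia
  | assert (H' : S n mod 6 = 4) by lia
  | assert (H' : S n mod 6 = 5) by lia
  | assert (H' : S n mod 6 = 0) by lia ];
  rewrite H in IH; rewrite H'; nia.
Qed.

Lemma Gs_bound n : 1 <= n -> Gs n + 16 <= 2 * n * n + 14 * n.
Proof. intros Hn. pose proof (Gs_exact n Hn). lia. Qed.

Fixpoint Aexp (up : nat -> nat) (n Qm : nat) : nat :=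
  match Qm with
  | O => O
  | S Q' => (Aexp up n Q' + (if inS (S Q') && Nat.eqb ((n mod S Q')%nat) 0 then up ((n / S Q')%nat) else 0))%nat
  end.
Fixpoint Atot (up : nat -> nat) (n : nat) : nat :=
  match n with O => O | S n' => (Atot up n' + Aexp up n n)%nat end.
Open Scope bool_scope.
Open Scope nat_scope.

Fixpoint Fs (up : nat -> nat) (m : nat) : nat :=
  match m with O => O | S m' => Fs up m' + up m end.

Definition fq (up : nat -> nat) (n q : nat) : nat := Fs up (n / q).
Arguments fq : simpl never.

Fixpoint Sw (up : nat -> nat) (n Qm : nat) : nat :=
  match Qm with O => O | S Q' => Sw up n Q' + (if inS (S Q') then fq up n (S Q') else 0) end.

Lemma Fs_step up n q : 1 <= q ->
  Fs up (S n / q) = Fs up (n / q) + (if Nat.eqb (S n mod q) 0 then up (S n / q) else 0).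
Proof.
  intros Hq. pose proof (Nat.div_mod_eq n q) as E. pose proof (Nat.mod_upper_bound n q ltac:(lia)) as B.
  set (a := n / q) in *. set (b := n mod q) in *.
  destruct (Nat.eq_dec (S b) q) as [Hb|Hb].
  - assert (H1 : S n / q = S a).
    { symmetry. apply (Nat.div_unique (S n) q (S a) 0); lia. }
    assert (H2 : S n mod q = 0).
    { symmetry. apply (Nat.mod_unique (S n) q (S a) 0); lia. }
    rewrite H1, H2. simpl. lia.
  - assert (H1 : S n / q = a).
    { symmetry. apply (Nat.div_unique (S n) q a (S b)); lia. }
    assert (H2 : S n mod q = S b).
    { symmetry. apply (Nat.mod_unique (S n) q a (S b)); lia. }
    rewrite H1, H2. simpl. lia.
Qed.

Lemma Sw_incr up n Qm : Sw up (S n) Qm = Sw up n Qm + Aexp up (S n) Qm.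
Proof.
  induction Qm as [|Qm IH]; [reflexivity|].
  cbn [Sw Aexp]. rewrite IH. unfold fq.
  destruct (inS (S Qm)); cbn [andb].
  - rewrite (Fs_step up n (S Qm)) by lia. lia.
  - lia.
Qed.

Lemma Atot_Sw up n : Atot up n = Sw up n n.
Proof.
  induction n as [|n IH]; [reflexivity|].
  cbn [Atot]. rewrite IH. cbn [Sw Aexp]. rewrite Sw_incr.
  rewrite Nat.Div0.mod_same, Nat.div_same by lia. unfold fq. rewrite Nat.div_same by lia.
  destruct (inS (S n)); cbn [andb Nat.eqb Fs]; lia.
Qed.

Definition upP (j : nat) : nat := if Nat.leb j 1 then 0 else j.
Definition upN (j : nat) : nat := j - 1.

Lemma upP_SS k : upP (S (S k)) = S (S k).
Proof. reflexivity. Qed.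

Lemma FsP_bound m : 2 * Fs upP m <= m * m + m /\ 16 * Fs upP m <= 9 * (m * m).
Proof.
  assert (H : forall k, 2 * Fs upP (S k) + 2 = S k * S k + S k).
  { intros k. induction k as [|k IH]; [reflexivity|].
    change (Fs upP (S (S k))) with (Fs upP (S k) + upP (S (S k))). rewrite upP_SS. nia. }
  destruct m as [|m]; [simpl; lia|].
  specialize (H m). split; [nia|].
  pose proof (Z.square_nonneg (Z.of_nat (S m) - 4)). nia.
Qed.

Lemma FsN_bound m : 2 * Fs upN m <= m * m.
Proof.
  assert (H : forall m, 2 * Fs upN m + m = m * m).
  { intros k. induction k as [|k IH]; [reflexivity|].
    change (Fs upN (S k)) with (Fs upN k + upN (S k)).
    replace (upN (S k)) with k by (unfold upN; lia). nia. }
  specialize (H m). lia.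
Qed.

Definition checkP (n : nat) : bool := Nat.leb (4 * Sw upP n n) (n * n + 4).
Definition checkN (n : nat) : bool := Nat.leb (4 * Sw upN n n + 4 * n) (n * n + 8).

Lemma small_ok : forallb (fun n => checkP n && checkN n) (seq 1 80) = true.
Proof. vm_compute. reflexivity. Qed.

Lemma small_P n : 1 <= n <= 80 -> 4 * Sw upP n n <= n * n + 4.
Proof.
  intros Hn. pose proof small_ok as H. rewrite forallb_forall in H.
  specialize (H n). assert (In n (seq 1 80)) by (apply in_seq; lia).
  specialize (H H0). apply andb_prop in H as [H _]. apply Nat.leb_le in H. exact H.
Qed.

Lemma small_N n : 1 <= n <= 80 -> 4 * Sw upN n n + 4 * n <= n * n + 8.
Proof.
  intros Hn. pose proof small_ok as H. rewrite forallb_forall in H.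
  specialize (H n). assert (In n (seq 1 80)) by (apply in_seq; lia).
  specialize (H H0). apply andb_prop in H as [_ H]. apply Nat.leb_le in H. exact H.
Qed.
Open Scope nat_scope.

Lemma Sw49 up N : Sw up N 49 = fq up N 2 + fq up N 3 + fq up N 5 + fq up N 7 + fq up N 11 + fq up N 13 + fq up N 17 + fq up N 19 + fq up N 23 + fq up N 25 + fq up N 29 + fq up N 31 + fq up N 35 + fq up N 37 + fq up N 41 + fq up N 43 + fq up N 47 + fq up N 49.
Proof. cbn -[fq]. rewrite !Nat.add_0_r. reflexivity. Qed.

Open Scope nat_scope.
Lemma headP N q : 1 <= q -> 2 * q * q * fq upP N q <= N * N + q * N.
Proof.
  intros Hq. unfold fq. pose proof (FsP_bound (N / q)) as [H1 _].
  pose proof (Nat.Div0.mul_div_le N q) as H2.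
  set (m := N / q) in *. set (F := Fs upP m) in *.
  assert (H3 : q * m * (q * m) <= N * N) by (apply Nat.mul_le_mono; lia).
  assert (H4 : q * (q * m) <= q * N) by (apply Nat.mul_le_mono_l; lia).
  assert (H5 : q * q * (2 * F) <= q * q * (m * m + m)) by (apply Nat.mul_le_mono_l; lia).
  nia.
Qed.

Lemma tailP N q : 1 <= q -> 16 * (q * q) * fq upP N q <= 9 * (N * N).
Proof.
  intros Hq. unfold fq. pose proof (FsP_bound (N / q)) as [_ H1].
  pose proof (Nat.Div0.mul_div_le N q) as H2.
  set (m := N / q) in *. set (F := Fs upP m) in *.
  assert (H3 : q * m * (q * m) <= N * N) by (apply Nat.mul_le_mono; lia).
  assert (H5 : q * q * (16 * F) <= q * q * (9 * (m * m))) by (apply Nat.mul_le_mono_l; lia).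
  nia.
Qed.

Lemma headN N q : 1 <= q -> 2 * (q * q) * fq upN N q <= N * N.
Proof.
  intros Hq. unfold fq. pose proof (FsN_bound (N / q)) as H1.
  pose proof (Nat.Div0.mul_div_le N q) as H2.
  set (m := N / q) in *. set (F := Fs upN m) in *.
  assert (H3 : q * m * (q * m) <= N * N) by (apply Nat.mul_le_mono; lia).
  assert (H5 : q * q * (2 * F) <= q * q * (m * m)) by (apply Nat.mul_le_mono_l; lia).
  nia.
Qed.

Open Scope R_scope.

Lemma Sw_S up N M : Sw up N (S M) = (Sw up N M + (if inS (S M) then fq up N (S M) else 0))%nat.
Proof. reflexivity. Qed.

Lemma tail_sum up N (c : R) : 0 <= c ->
  (forall q, (50 <= q)%nat -> INR (fq up N q) * (INR q * INR q) <= c * (INR N * INR N)) ->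
  forall M, (49 <= M)%nat -> INR (Sw up N M) <= INR (Sw up N 49) + c * (INR N * INR N) * (1/49 - 1 / INR M).
Proof.
  intros Hc Ht M HM. induction HM as [|M HM IH].
  - replace (1/49 - 1 / INR 49) with 0 by (simpl; field). lra.
  - rewrite Sw_S, plus_INR.
    assert (HMr : 49 <= INR M) by (replace 49 with (INR 49) by (simpl; ring); apply le_INR; exact HM).
    assert (HX : 0 <= INR N * INR N) by (apply Rmult_le_pos; apply pos_INR).
    assert (Hterm : INR (if inS (S M) then fq up N (S M) else 0%nat) <= c * (INR N * INR N) * (1 / INR M - 1 / INR (S M))).
    { rewrite S_INR.
      assert (Hfrac : 1 / INR M - 1 / (INR M + 1) = 1 / (INR M * (INR M + 1))) by (field; lra).
      rewrite Hfrac.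
      destruct (inS (S M)).
      - pose proof (Ht (S M) ltac:(lia)) as H. rewrite S_INR in H.
        assert (Hf : 0 <= INR (fq up N (S M))) by apply pos_INR.
        apply Rmult_le_reg_r with (INR M * (INR M + 1)); [nra|].
        unfold Rdiv. rewrite Rmult_1_l.
        rewrite Rmult_assoc, Rinv_l by nra. rewrite Rmult_1_r. nra.
      - simpl. apply Rmult_le_pos; [apply Rmult_le_pos; lra|].
        apply Rlt_le, Rdiv_lt_0_compat; nra. }
    rewrite S_INR in Hterm |- *.
    set (K := c * (INR N * INR N)) in *.
    assert (E : K * (1 / 49 - 1 / INR M) + K * (1 / INR M - 1 / (INR M + 1)) = K * (1 / 49 - 1 / (INR M + 1))) by ring.
    lra.
Qed.

Lemma headPR N q (r : R) : (1 <= q)%nat -> INR q = r ->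
  2 * r * r * INR (fq upP N q) <= INR N * INR N + r * INR N.
Proof.
  intros Hq <-. pose proof (headP N q Hq) as H. apply le_INR in H.
  rewrite !mult_INR, plus_INR, !mult_INR in H. simpl (INR 2) in H. lra.
Qed.

Lemma headNR N q (r : R) : (1 <= q)%nat -> INR q = r ->
  2 * (r * r) * INR (fq upN N q) <= INR N * INR N.
Proof.
  intros Hq <-. pose proof (headN N q Hq) as H. apply le_INR in H.
  rewrite !mult_INR in H. simpl (INR 2) in H. lra.
Qed.

Lemma tailPR N : forall q, (50 <= q)%nat -> INR (fq upP N q) * (INR q * INR q) <= 9/16 * (INR N * INR N).
Proof.
  intros q Hq. pose proof (tailP N q ltac:(lia)) as H. apply le_INR in H.
  rewrite !mult_INR in H. replace (INR 16) with 16 in H by (rewrite INR_IZR_INZ; reflexivity).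
  replace (INR 9) with 9 in H by (rewrite INR_IZR_INZ; reflexivity). lra.
Qed.

Lemma tailNR N : forall q, (50 <= q)%nat -> INR (fq upN N q) * (INR q * INR q) <= 1/2 * (INR N * INR N).
Proof.
  intros q Hq. pose proof (headN N q ltac:(lia)) as H. apply le_INR in H.
  rewrite !mult_INR in H. simpl (INR 2) in H. lra.
Qed.

Lemma bigP N : (81 <= N)%nat -> 4 * INR (Sw upP N N) <= INR N * INR N + 4.
Proof.
  intros HN.
  pose proof (tail_sum upP N (9/16) ltac:(lra) (tailPR N) N ltac:(lia)) as HT.
  assert (HNr : 81 <= INR N) by (replace 81 with (INR 81) by (rewrite INR_IZR_INZ; reflexivity); apply le_INR; exact HN).
  assert (HXY : 81 * INR N <= INR N * INR N) by nra.
  assert (Hinv : 0 <= 1 / INR N) by (apply Rlt_le, Rdiv_lt_0_compat; lra).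
  assert (HT2 : INR (Sw upP N N) <= INR (Sw upP N 49) + 9/16 * (INR N * INR N) * (1/49)).
  { eapply Rle_trans; [exact HT|]. assert (0 <= INR N * INR N) by nra. nra. }
  rewrite Sw49, !plus_INR in HT2.
  pose proof (headPR N 2 2 ltac:(lia) ltac:(rewrite INR_IZR_INZ; reflexivity)).
  pose proof (headPR N 3 3 ltac:(lia) ltac:(rewrite INR_IZR_INZ; reflexivity)).
  pose proof (headPR N 5 5 ltac:(lia) ltac:(rewrite INR_IZR_INZ; reflexivity)).
  pose proof (headPR N 7 7 ltac:(lia) ltac:(rewrite INR_IZR_INZ; reflexivity)).
  pose proof (headPR N 11 11 ltac:(lia) ltac:(rewrite INR_IZR_INZ; reflexivity)).
  pose proof (headPR N 13 13 ltac:(lia) ltac:(rewrite INR_IZR_INZ; reflexivity)).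
  pose proof (headPR N 17 17 ltac:(lia) ltac:(rewrite INR_IZR_INZ; reflexivity)).
  pose proof (headPR N 19 19 ltac:(lia) ltac:(rewrite INR_IZR_INZ; reflexivity)).
  pose proof (headPR N 23 23 ltac:(lia) ltac:(rewrite INR_IZR_INZ; reflexivity)).
  pose proof (headPR N 25 25 ltac:(lia) ltac:(rewrite INR_IZR_INZ; reflexivity)).
  pose proof (headPR N 29 29 ltac:(lia) ltac:(rewrite INR_IZR_INZ; reflexivity)).
  pose proof (headPR N 31 31 ltac:(lia) ltac:(rewrite INR_IZR_INZ; reflexivity)).
  pose proof (headPR N 35 35 ltac:(lia) ltac:(rewrite INR_IZR_INZ; reflexivity)).
  pose proof (headPR N 37 37 ltac:(lia) ltac:(rewrite INR_IZR_INZ; reflexivity)).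
  pose proof (headPR N 41 41 ltac:(lia) ltac:(rewrite INR_IZR_INZ; reflexivity)).
  pose proof (headPR N 43 43 ltac:(lia) ltac:(rewrite INR_IZR_INZ; reflexivity)).
  pose proof (headPR N 47 47 ltac:(lia) ltac:(rewrite INR_IZR_INZ; reflexivity)).
  pose proof (headPR N 49 49 ltac:(lia) ltac:(rewrite INR_IZR_INZ; reflexivity)).
  lra.
Qed.

Lemma bigN N : (81 <= N)%nat -> 4 * INR (Sw upN N N) + 4 * INR N <= INR N * INR N + 8.
Proof.
  intros HN.
  pose proof (tail_sum upN N (1/2) ltac:(lra) (tailNR N) N ltac:(lia)) as HT.
  assert (HNr : 81 <= INR N) by (replace 81 with (INR 81) by (rewrite INR_IZR_INZ; reflexivity); apply le_INR; exact HN).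
  assert (HXY : 81 * INR N <= INR N * INR N) by nra.
  assert (Hinv : 0 <= 1 / INR N) by (apply Rlt_le, Rdiv_lt_0_compat; lra).
  assert (HT2 : INR (Sw upN N N) <= INR (Sw upN N 49) + 1/2 * (INR N * INR N) * (1/49)).
  { eapply Rle_trans; [exact HT|]. assert (0 <= INR N * INR N) by nra. nra. }
  rewrite Sw49, !plus_INR in HT2.
  pose proof (headNR N 2 2 ltac:(lia) ltac:(rewrite INR_IZR_INZ; reflexivity)).
  pose proof (headNR N 3 3 ltac:(lia) ltac:(rewrite INR_IZR_INZ; reflexivity)).
  pose proof (headNR N 5 5 ltac:(lia) ltac:(rewrite INR_IZR_INZ; reflexivity)).
  pose proof (headNR N 7 7 ltac:(lia) ltac:(rewrite INR_IZR_INZ; reflexivity)).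
  pose proof (headNR N 11 11 ltac:(lia) ltac:(rewrite INR_IZR_INZ; reflexivity)).
  pose proof (headNR N 13 13 ltac:(lia) ltac:(rewrite INR_IZR_INZ; reflexivity)).
  pose proof (headNR N 17 17 ltac:(lia) ltac:(rewrite INR_IZR_INZ; reflexivity)).
  pose proof (headNR N 19 19 ltac:(lia) ltac:(rewrite INR_IZR_INZ; reflexivity)).
  pose proof (headNR N 23 23 ltac:(lia) ltac:(rewrite INR_IZR_INZ; reflexivity)).
  pose proof (headNR N 25 25 ltac:(lia) ltac:(rewrite INR_IZR_INZ; reflexivity)).
  pose proof (headNR N 29 29 ltac:(lia) ltac:(rewrite INR_IZR_INZ; reflexivity)).
  pose proof (headNR N 31 31 ltac:(lia) ltac:(rewrite INR_IZR_INZ; reflexivity)).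
  pose proof (headNR N 35 35 ltac:(lia) ltac:(rewrite INR_IZR_INZ; reflexivity)).
  pose proof (headNR N 37 37 ltac:(lia) ltac:(rewrite INR_IZR_INZ; reflexivity)).
  pose proof (headNR N 41 41 ltac:(lia) ltac:(rewrite INR_IZR_INZ; reflexivity)).
  pose proof (headNR N 43 43 ltac:(lia) ltac:(rewrite INR_IZR_INZ; reflexivity)).
  pose proof (headNR N 47 47 ltac:(lia) ltac:(rewrite INR_IZR_INZ; reflexivity)).
  pose proof (headNR N 49 49 ltac:(lia) ltac:(rewrite INR_IZR_INZ; reflexivity)).
  lra.
Qed.

Open Scope R_scope.

Section Main.
Variables (P Q : Z) (alpha : R).
Hypothesis hP : P <> 0%Z.
Hypothesis hQ : Q <> 0%Z.
Hypothesis hcop : Z.gcd P Q = 1%Z.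
Hypothesis hDelta : (P * P - 4 * Q > 0)%Z.
Hypothesis halpha : alpha * alpha - IZR P * alpha + IZR Q = 0.
Hypothesis hlargest : Rabs alpha > Rabs (IZR P - alpha).

Notation be := (beta P alpha).
Notation s := (Rabs alpha).
Notation t := (Rabs (beta P alpha)).
Notation uu := (u P alpha).

Lemma hl : s > t. Proof. exact hlargest. Qed.

Lemma IZR_ge1 (z : Z) : z <> 0%Z -> 1 <= Rabs (IZR z).
Proof.
  intro H. rewrite <- abs_IZR. apply IZR_le. lia.
Qed.

Lemma st_Q : s * t = Rabs (IZR Q).
Proof. rewrite <- Rabs_mult. unfold beta. rewrite <- (prodab P Q alpha halpha). reflexivity. Qed.

Lemma st_ge1 : 1 <= s * t.
Proof. rewrite st_Q. apply IZR_ge1, hQ. Qed.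

Lemma s_minus_t : 1 <= s - t.
Proof.
  pose proof hl as Hl. pose proof (Rabs_pos be) as Ht.
  assert (Hsq : 1 <= (s - t) * (s - t)).
  { assert (Es : s * s = alpha * alpha) by (rewrite <- Rabs_mult; apply Rabs_right; nra).
    assert (Et : t * t = be * be) by (rewrite <- Rabs_mult; apply Rabs_right; nra).
    assert (Hab := prodab P Q alpha halpha). assert (Hsum := sumab P alpha).
    assert (Hst : s * t = Rabs (alpha * be)) by (rewrite Rabs_mult; reflexivity).
    destruct (Rcase_abs (alpha * be)) as [Hn|Hp].
    - rewrite (Rabs_left (alpha * be)) in Hst by exact Hn.
      assert (E : (s - t) * (s - t) = (alpha + be) * (alpha + be)) by nra.
      rewrite E, Hsum. pose proof (IZR_ge1 P hP) as HP.
      assert (Rabs (IZR P) * Rabs (IZR P) = IZR P * IZR P) by (rewrite <- Rabs_mult; apply Rabs_right; nra).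
      nra.
    - rewrite (Rabs_right (alpha * be)) in Hst by exact Hp.
      assert (E : (s - t) * (s - t) = (alpha - be) * (alpha - be)) by nra.
      rewrite E.
      assert (E2 : (alpha - be) * (alpha - be) = IZR (P * P - 4 * Q)).
      { rewrite minus_IZR, !mult_IZR. rewrite <- Hsum, <- Hab. ring. }
      rewrite E2. apply IZR_le. lia. }
  nra.
Qed.

Lemma s_sq : s + 1 <= s * s.
Proof. pose proof s_minus_t. pose proof st_ge1. pose proof (Rabs_pos be). nra. Qed.

Lemma s_gt1 : 1 < s.
Proof. pose proof s_sq. pose proof (Rabs_pos alpha). nra. Qed.

Lemma s3 : 4 <= s ^ 3.
Proof. pose proof s_sq. pose proof s_gt1. simpl. nra. Qed.

Lemma s7 : 27 <= s ^ 7.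
Proof.
  pose proof s_sq as H. pose proof s_gt1 as H1.
  assert (Hs : 16/10 <= s) by nra.
  assert (H4 : 3 * s + 2 <= s ^ 4) by (simpl; nra).
  assert (H3 : 2 * s + 1 <= s ^ 3) by (simpl; nra).
  replace (s ^ 7) with (s ^ 4 * s ^ 3) by ring.
  assert (0 <= 3 * s + 2) by lra. assert (0 <= 2*s+1) by lra.
  nra.
Qed.


Lemma alpha_nz : alpha <> 0.
Proof. intro H. pose proof s_gt1. rewrite H, Rabs_R0 in H0. lra. Qed.

Definition rho := be / alpha.
Fixpoint G (k : nat) : R := match k with O => 0 | S k' => 1 + rho * G k' end.

Lemma u_succ k : uu (S k) = alpha ^ k + be * uu k.
Proof. unfold u. simpl. field. apply ab_neq; assumption. Qed.

Lemma u_G k : uu k * alpha = alpha ^ k * G k.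
Proof.
  induction k as [|k IH].
  - unfold u. simpl. field. apply ab_neq; assumption.
  - rewrite u_succ. simpl. unfold rho.
    replace ((alpha ^ k + be * uu k) * alpha) with (alpha ^ k * alpha + be * (uu k * alpha)) by ring.
    rewrite IH. field. apply alpha_nz.
Qed.

Lemma u_G_abs k : Rabs (uu k) * s = s ^ k * Rabs (G k).
Proof. rewrite <- Rabs_mult, u_G, Rabs_mult, RPow_abs. reflexivity. Qed.

Lemma rho_abs : Rabs rho * s = t.
Proof. unfold rho. rewrite <- Rabs_mult. f_equal. field. apply alpha_nz. Qed.

Lemma rho_lt1 : Rabs rho < 1.
Proof. pose proof rho_abs. pose proof hl. pose proof s_gt1. pose proof (Rabs_pos rho). nra. Qed.

Lemma rho_sign : alpha * be = rho * (alpha * alpha).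
Proof. unfold rho. field. apply alpha_nz. Qed.

Lemma G_pos_bounds : 0 < alpha * be -> forall k, (1 <= k)%nat -> 1 <= G k /\ G k * (1 - rho) <= 1.
Proof.
  intros Hpos. pose proof rho_sign. pose proof rho_lt1.
  assert (Hr : 0 < rho).
  { destruct (Rlt_or_le 0 rho); auto. pose proof (Rle_0_sqr alpha). unfold Rsqr in *. nra. }
  rewrite Rabs_right in H0 by lra.
  intros k Hk. induction k as [|k IH]; [lia|].
  destruct k as [|k].
  - simpl. lra.
  - destruct IH as [H1 H2]; [lia|]. simpl (G (S (S k))). simpl in H1, H2. nra.
Qed.

Lemma G_neg_bounds : alpha * be < 0 -> forall k, (1 <= k)%nat -> 1 + rho <= G k /\ G k <= 1.
Proof.
  intros Hneg. pose proof rho_sign. pose proof rho_lt1.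
  assert (Hr : rho < 0).
  { destruct (Rlt_or_le rho 0); auto. pose proof (Rle_0_sqr alpha). unfold Rsqr in *. nra. }
  rewrite Rabs_left in H0 by lra.
  intros k Hk. induction k as [|k IH]; [lia|].
  destruct k as [|k].
  - simpl. lra.
  - destruct IH as [H1 H2]; [lia|]. simpl (G (S (S k))). simpl in H1, H2. nra.
Qed.

Lemma spow_pos k : 0 < s ^ k.
Proof. apply pow_lt. pose proof s_gt1. lra. Qed.

Lemma U_lowP k : 0 < alpha * be -> (1 <= k)%nat -> s ^ k <= s * Rabs (uu k).
Proof.
  intros Hp Hk. destruct (G_pos_bounds Hp k Hk) as [H1 _].
  pose proof (u_G_abs k). pose proof (spow_pos k).
  rewrite (Rabs_right (G k)) in H by lra. nra.
Qed.

Lemma U_upP k : 0 < alpha * be -> Rabs (uu k) <= s ^ k.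
Proof.
  intros Hp. destruct k as [|k].
  - unfold u. simpl. replace (1 - 1) with 0 by ring. unfold Rdiv. rewrite Rmult_0_l, Rabs_R0. lra.
  - destruct (G_pos_bounds Hp (S k) ltac:(lia)) as [H1 H2].
    pose proof (u_G_abs (S k)). pose proof (spow_pos (S k)).
    pose proof rho_abs. pose proof rho_sign. pose proof s_minus_t. pose proof s_gt1.
    assert (Hr : 0 < rho).
    { destruct (Rlt_or_le 0 rho); auto. pose proof (Rle_0_sqr alpha). unfold Rsqr in *. nra. }
    rewrite (Rabs_right (G (S k))) in H by lra. rewrite (Rabs_right rho) in H3 by lra.
    assert (HG : G (S k) <= s) by nra.
    nra.
Qed.

Lemma U_lowN k : alpha * be < 0 -> (1 <= k)%nat -> s ^ k <= s * s * Rabs (uu k).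
Proof.
  intros Hn Hk. destruct (G_neg_bounds Hn k Hk) as [H1 H2].
  pose proof (u_G_abs k). pose proof (spow_pos k).
  pose proof rho_abs. pose proof rho_sign. pose proof s_minus_t. pose proof s_gt1.
  assert (Hr : rho < 0).
  { destruct (Rlt_or_le rho 0); auto. pose proof (Rle_0_sqr alpha). unfold Rsqr in *. nra. }
  rewrite (Rabs_left rho) in H3 by lra.
  assert (HG : 1 <= s * G k) by nra.
  rewrite (Rabs_right (G k)) in H by nra. nra.
Qed.

Lemma U_upN k : alpha * be < 0 -> (1 <= k)%nat -> s * Rabs (uu k) <= s ^ k.
Proof.
  intros Hn Hk. destruct (G_neg_bounds Hn k Hk) as [H1 H2].
  pose proof (u_G_abs k). pose proof (spow_pos k).
  pose proof rho_abs. pose proof rho_sign. pose proof s_minus_t. pose proof s_gt1.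
  assert (Hr : rho < 0).
  { destruct (Rlt_or_le rho 0); auto. pose proof (Rle_0_sqr alpha). unfold Rsqr in *. nra. }
  rewrite (Rabs_left rho) in H3 by lra.
  assert (HG : 0 < G k) by nra.
  rewrite (Rabs_right (G k)) in H by nra. rewrite Rmult_comm. nra.
Qed.

Lemma ab_nz : alpha * be <> 0.
Proof. rewrite (prodab P Q alpha halpha). apply not_0_IZR, hQ. Qed.

Lemma U_up k : Rabs (uu k) <= s ^ k.
Proof.
  destruct (Rlt_or_le 0 (alpha * be)) as [Hp|Hn].
  - apply U_upP; exact Hp.
  - assert (Hn' : alpha * be < 0) by (pose proof ab_nz; lra).
    destruct k as [|k].
    + unfold u. simpl. replace (1 - 1) with 0 by ring. unfold Rdiv. rewrite Rmult_0_l, Rabs_R0. lra.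
    + pose proof (U_upN (S k) Hn' ltac:(lia)). pose proof s_gt1. pose proof (Rabs_pos (uu (S k))). nra.
Qed.

Lemma U_nz k : (1 <= k)%nat -> uu k <> 0.
Proof.
  intros Hk H. pose proof (spow_pos k).
  destruct (Rlt_or_le 0 (alpha * be)) as [Hp|Hn].
  - pose proof (U_lowP k Hp Hk). rewrite H, Rabs_R0 in H1. lra.
  - assert (Hn' : alpha * be < 0) by (pose proof ab_nz; lra).
    pose proof (U_lowN k Hn' Hk). rewrite H, Rabs_R0 in H1. lra.
Qed.


Notation U := (lucasU P Q).
Notation L := (lcm_lucas P Q).

Lemma IZR_U k : IZR (U k) = uu k.
Proof. apply IZR_luc; assumption. Qed.

Lemma Unz k : (1 <= k)%nat -> U k <> 0%Z.
Proof. intros Hk H. apply (U_nz k Hk). rewrite <- IZR_U, H. reflexivity. Qed.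

Lemma L_pos n : (0 < L n)%Z.
Proof.
  induction n as [|n IH]; [simpl; lia|].
  rewrite L_succ. pose proof (Z.lcm_nonneg (L n) (U (S n))).
  assert (Z.lcm (L n) (U (S n)) <> 0%Z).
  { intro H0. apply Z.lcm_eq_0 in H0 as [H0|H0]; [lia| apply (Unz (S n)); [lia|exact H0]]. }
  lia.
Qed.

Lemma step_eq k : IZR (L (S k)) * IZR (Z.gcd (L k) (U (S k))) = IZR (L k) * Rabs (uu (S k)).
Proof.
  rewrite L_succ, <- mult_IZR, Zlcm_gcd, Z.abs_mul, mult_IZR.
  rewrite (Z.abs_eq (L k)) by apply L_nonneg. rewrite abs_IZR, IZR_U. reflexivity.
Qed.

Lemma step_up k (D : Z) (R : R) :
  (D | L k)%Z -> (D | U (S k))%Z -> D <> 0%Z ->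
  Rabs (uu (S k)) <= R * Rabs (IZR D) -> IZR (L (S k)) <= IZR (L k) * R.
Proof.
  intros H1 H2 HD HR.
  pose proof (step_eq k) as E.
  set (g := Z.gcd (L k) (U (S k))) in *.
  assert (Hg : (D | g)%Z) by (apply Z.gcd_greatest; assumption).
  assert (Hgpos : (0 < g)%Z).
  { pose proof (Z.gcd_nonneg (L k) (U (S k))). assert (g <> 0%Z).
    { intro H0. apply Z.gcd_eq_0 in H0 as [H0 _]. pose proof (L_pos k). lia. }
    fold g in H. lia. }
  assert (HDg : Rabs (IZR D) <= IZR g).
  { rewrite <- abs_IZR. apply IZR_le. apply Z.divide_pos_le; [lia| apply Z.divide_abs_l; exact Hg]. }
  pose proof (L_pos (S k)) as HL1. pose proof (L_pos k) as HL0.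
  apply IZR_lt in HL1. apply IZR_lt in HL0.
  assert (HD0 : 0 < Rabs (IZR D)) by (apply Rabs_pos_lt, not_0_IZR, HD).
  nra.
Qed.

Lemma hst : s > t. Proof. exact hlargest. Qed.

Lemma tpow_le m : t ^ m <= s ^ m.
Proof. pose proof hst. apply pow_incr. split; [apply Rabs_pos| lra]. Qed.

Lemma bound2 m : Rabs (alpha ^ m + be ^ m) <= 2 * s ^ m.
Proof.
  pose proof (tpow_le m). eapply Rle_trans; [apply Rabs_triang|].
  rewrite <- !RPow_abs. lra.
Qed.

Lemma bound3 m (e : R) : (e = 1 \/ e = -1) ->
  Rabs (alpha ^ m * alpha ^ m + e * (alpha ^ m * be ^ m) + be ^ m * be ^ m) <= 3 * s ^ (m + m).
Proof.
  intros He. pose proof (tpow_le m). pose proof (pow_le t m (Rabs_pos _)).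
  eapply Rle_trans; [apply Rabs_triang|].
  eapply Rle_trans; [apply Rplus_le_compat_r, Rabs_triang|].
  rewrite pow_add, !Rabs_mult, <- !RPow_abs.
  assert (Rabs e = 1) by (destruct He as [-> | ->]; unfold Rabs; destruct Rcase_abs; lra).
  rewrite H1. nra.
Qed.

Lemma L_up_step k : IZR (L (S k)) <= IZR (L k) * Rabs (uu (S k)).
Proof.
  apply (step_up k 1%Z).
  - apply Z.divide_1_l. - apply Z.divide_1_l. - lia.
  - rewrite Rabs_R1. lra.
Qed.


Lemma up_from k D R : (D | L k)%Z -> (D | U (S k))%Z -> D <> 0%Z -> 0 <= R ->
  Rabs (uu (S k)) <= R * Rabs (IZR D) -> R ^ 6 <= s ^ (tt (S k)) ->
  IZR (L (S k)) ^ 6 <= IZR (L k) ^ 6 * s ^ (tt (S k)).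
Proof.
  intros H1 H2 H3 HR H4 H5.
  pose proof (step_up k D R H1 H2 H3 H4) as Hs.
  pose proof (L_pos (S k)) as HL1. pose proof (L_pos k) as HL0.
  apply IZR_lt in HL1. apply IZR_lt in HL0.
  eapply Rle_trans.
  - apply pow_incr. split; [lra| exact Hs].
  - rewrite Rpow_mult_distr. apply Rmult_le_compat_l; [apply pow_le; lra| exact H5].
Qed.

Lemma uu1 : uu 1 = 1.
Proof. rewrite <- IZR_U, luc1. reflexivity. Qed.

Lemma Um_nz m : (1 <= m)%nat -> IZR (U m) <> 0.
Proof. intros Hm. apply not_0_IZR, Unz, Hm. Qed.

Lemma s9 : 64 <= s ^ 9.
Proof.
  pose proof s3. replace (s ^ 9) with (s ^ 3 * s ^ 3 * s ^ 3) by ring.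
  assert (0 <= s ^ 3) by lra. assert (16 <= s ^ 3 * s ^ 3) by nra. nra.
Qed.

Lemma s14 : 729 <= s ^ 14.
Proof.
  pose proof s7. replace (s ^ 14) with (s ^ 7 * s ^ 7) by ring. nra.
Qed.

Lemma up_case1 : IZR (L 1) ^ 6 <= IZR (L 0) ^ 6 * s ^ (tt 1).
Proof.
  apply (up_from 0 1%Z 1).
  - apply Z.divide_1_l. - apply Z.divide_1_l. - lia. - lra. - rewrite uu1, Rabs_R1. lra.
  - simpl. lra.
Qed.

Lemma up_case15 k : k <> 0%nat -> ((S k) mod 6 = 1 \/ (S k) mod 6 = 5)%nat ->
  IZR (L (S k)) ^ 6 <= IZR (L k) ^ 6 * s ^ (tt (S k)).
Proof.
  intros Hk Hr.
  assert (Ht : tt (S k) = (S k * 6)%nat).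
  { unfold tt. destruct (Nat.eqb_spec (S k) 1); [lia|].
    destruct Hr as [-> | ->]; lia. }
  apply (up_from k 1%Z (s ^ (S k))).
  - apply Z.divide_1_l. - apply Z.divide_1_l. - lia.
  - apply pow_le. pose proof s_gt1. lra.
  - rewrite Rabs_R1, Rmult_1_r. apply U_up.
  - rewrite Ht, <- pow_mult. lra.
Qed.

Lemma up_case24 k m : (S k = m + m)%nat -> ((S k) mod 6 = 2 \/ (S k) mod 6 = 4)%nat ->
  IZR (L (S k)) ^ 6 <= IZR (L k) ^ 6 * s ^ (tt (S k)).
Proof.
  intros Hk Hr.
  assert (Hm : (1 <= m)%nat) by lia.
  assert (Ht : tt (S k) = (9 + m * 6)%nat).
  { unfold tt. destruct (Nat.eqb_spec (S k) 1); [lia|].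
    destruct Hr as [Hr | Hr]; rewrite Hr; lia. }
  apply (up_from k (U m) (2 * s ^ m)).
  - apply U_div_L; lia.
  - rewrite Hk. replace (m + m)%nat with (2 * m)%nat by lia. apply U_div_mult.
  - apply Unz, Hm.
  - pose proof (spow_pos m). lra.
  - rewrite Hk, u2 by exact (ab_neq P alpha hlargest). rewrite Rabs_mult, IZR_U.
    pose proof (bound2 m). pose proof (Rabs_pos (uu m)). nra.
  - rewrite Ht, (pow_add s 9), pow_mult. pose proof s9. pose proof (spow_pos m).
    rewrite Rpow_mult_distr. replace (2 ^ 6) with 64 by ring.
    apply Rmult_le_compat_r; [apply pow_le; lra| lra].
Qed.

Lemma up_case3 k m : (S k = m + m + m)%nat -> ((S k) mod 6 = 3)%nat ->
  IZR (L (S k)) ^ 6 <= IZR (L k) ^ 6 * s ^ (tt (S k)).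
Proof.
  intros Hk Hr.
  assert (Hm : (1 <= m)%nat) by lia.
  assert (Ht : tt (S k) = (14 + (m + m) * 6)%nat).
  { unfold tt. destruct (Nat.eqb_spec (S k) 1); [lia|]. rewrite Hr; lia. }
  apply (up_from k (U m) (3 * s ^ (m + m))).
  - apply U_div_L; lia.
  - rewrite Hk. replace (m + m + m)%nat with (3 * m)%nat by lia. apply U_div_mult.
  - apply Unz, Hm.
  - pose proof (spow_pos (m + m)). lra.
  - rewrite Hk, u3 by exact (ab_neq P alpha hlargest). rewrite Rabs_mult, IZR_U.
    pose proof (bound3 m 1 ltac:(left; reflexivity)). rewrite Rmult_1_l in H.
    pose proof (Rabs_pos (uu m)). nra.
  - rewrite Ht, (pow_add s 14), pow_mult. pose proof s14. pose proof (spow_pos (m + m)).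
    rewrite Rpow_mult_distr. replace (3 ^ 6) with 729 by ring.
    apply Rmult_le_compat_r; [apply pow_le; lra| lra].
Qed.

Lemma up_case0 k m : (S k = m + m + m + m + m + m)%nat ->
  IZR (L (S k)) ^ 6 <= IZR (L k) ^ 6 * s ^ (tt (S k)).
Proof.
  intros Hk.
  assert (Hm : (1 <= m)%nat) by lia.
  assert (Ht : tt (S k) = (14 + (m + m) * 6)%nat).
  { unfold tt. destruct (Nat.eqb_spec (S k) 1); [lia|].
    replace ((S k) mod 6)%nat with 0%nat by (rewrite Hk; replace (m+m+m+m+m+m)%nat with (m*6)%nat by lia; rewrite Nat.Div0.mod_mul; reflexivity).
    lia. }
  set (D := Z.lcm (U (m + m)) (U (m + m + m))).
  assert (HD0 : D <> 0%Z).
  { unfold D. intro H. apply Z.lcm_eq_0 in H as [H|H]; revert H; apply Unz; lia. }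
  apply (up_from k D (3 * s ^ (m + m))).
  - apply Z.lcm_least; apply U_div_L; lia.
  - rewrite Hk. apply Z.lcm_least.
    + replace (m + m + m + m + m + m)%nat with (3 * (m + m))%nat by lia. apply U_div_mult.
    + replace (m + m + m + m + m + m)%nat with (2 * (m + m + m))%nat by lia. apply U_div_mult.
  - exact HD0.
  - pose proof (spow_pos (m + m)). lra.
  -
    set (g := Z.gcd (U (m + m)) (U (m + m + m))).
    assert (Hgm : Nat.gcd (m + m) (m + m + m) = m).
    { replace (m + m + m)%nat with (m + (m + m))%nat by lia.
      rewrite Nat.gcd_add_diag_r, Nat.gcd_comm, Nat.gcd_add_diag_r. apply Nat.gcd_diag. }
    assert (Hg : (g | U m)%Z).
    { pose proof (U_strong P Q hcop (m + m) (m + m + m) g) as H.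
      rewrite Hgm in H. apply H; [apply Z.gcd_divide_l| apply Z.gcd_divide_r]. }
    assert (Hgpos : (0 < g)%Z).
    { pose proof (Z.gcd_nonneg (U (m + m)) (U (m + m + m))). fold g in H.
      assert (g <> 0%Z). { intro H0. apply Z.gcd_eq_0 in H0 as [H0 _]. revert H0. apply Unz. lia. }
      lia. }
    assert (Hgle : IZR g <= Rabs (IZR (U m))).
    { rewrite <- abs_IZR. apply IZR_le. apply Z.divide_pos_le.
      - pose proof (Unz m Hm). lia.
      - apply Z.divide_abs_r. exact Hg. }
    assert (HDg : IZR D * IZR g = Rabs (uu (m + m)) * Rabs (uu (m + m + m))).
    { unfold D, g. rewrite <- mult_IZR, Zlcm_gcd, abs_IZR, mult_IZR, !IZR_U, Rabs_mult. reflexivity. }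
    assert (HD : 0 <= IZR D) by (apply IZR_le; unfold D; apply Z.lcm_nonneg).
    rewrite (Rabs_right (IZR D)) by lra.
    pose proof (u6 P alpha (ab_neq P alpha hlargest) m) as E6.
    rewrite <- Hk in E6.
    pose proof (bound3 m (-1) ltac:(right; reflexivity)) as B3.
    replace (alpha ^ m * alpha ^ m + -1 * (alpha ^ m * be ^ m) + be ^ m * be ^ m)
      with (alpha ^ m * alpha ^ m - alpha ^ m * be ^ m + be ^ m * be ^ m) in B3 by ring.
    assert (Hum : 0 < Rabs (uu m)) by (apply Rabs_pos_lt; rewrite <- IZR_U; apply Um_nz, Hm).
    rewrite IZR_U in Hgle.
    assert (E6a : Rabs (uu (S k)) * Rabs (uu m) =
       Rabs (uu (m + m)) * Rabs (uu (m + m + m)) *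
       Rabs (alpha ^ m * alpha ^ m - alpha ^ m * be ^ m + be ^ m * be ^ m))
      by (rewrite <- !Rabs_mult, E6; reflexivity).
    pose proof (Rabs_pos (alpha ^ m * alpha ^ m - alpha ^ m * be ^ m + be ^ m * be ^ m)).
    pose proof (Rabs_pos (uu (m + m))). pose proof (Rabs_pos (uu (m + m + m))).
    pose proof (spow_pos (m + m)).
    assert (Hx : Rabs (uu (S k)) * Rabs (uu m) <= 3 * s ^ (m + m) * IZR D * Rabs (uu m)).
    { assert (0 < IZR g) by (apply IZR_lt; exact Hgpos). rewrite E6a. rewrite <- HDg.
      apply Rle_trans with (IZR D * IZR g * (3 * s ^ (m + m))).
      - apply Rmult_le_compat_l; [|exact B3]. apply Rmult_le_pos; lra.
      - replace (IZR D * IZR g * (3 * s ^ (m + m))) with (IZR g * (IZR D * (3 * s ^ (m + m)))) by ring.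
        replace (3 * s ^ (m + m) * IZR D * Rabs (uu m)) with (Rabs (uu m) * (IZR D * (3 * s ^ (m + m)))) by ring.
        apply Rmult_le_compat_r; [|exact Hgle]. apply Rmult_le_pos; lra. }
    apply Rmult_le_reg_r with (Rabs (uu m)); [exact Hum| lra].
  - rewrite Ht, (pow_add s 14), pow_mult. pose proof s14. pose proof (spow_pos (m + m)).
    rewrite Rpow_mult_distr. replace (3 ^ 6) with 729 by ring.
    apply Rmult_le_compat_r; [apply pow_le; lra| lra].
Qed.

Fixpoint Mprod (n Qm : nat) : Z :=
  match Qm with
  | O => 1%Z
  | S Q' => (Mprod n Q' * (if inS (S Q') && Nat.eqb ((n mod S Q')%nat) 0 then U ((n / S Q')%nat) else 1))%Z
  end.

Lemma div_ge1 n q : (1 <= n)%nat -> (1 <= q)%nat -> (n mod q)%nat = 0%nat -> (1 <= (n / q)%nat)%nat.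
Proof.
  intros Hn Hq Hm. pose proof (Nat.div_mod_eq n q) as E. rewrite Hm, Nat.add_0_r in E.
  destruct (n / q)%nat eqn:Hd; [rewrite Nat.mul_0_r in E; lia| lia].
Qed.

Lemma M_div n q Qm : inS q = true -> (n mod q)%nat = 0%nat -> (1 <= q <= Qm)%nat ->
  (U ((n / q)%nat) | Mprod n Qm)%Z.
Proof.
  intros HS Hm Hq. induction Qm as [|Qm IH]; [lia|].
  destruct (Nat.eq_dec q (S Qm)) as [Heq|Hne]; cbn [Mprod].
  - subst q. rewrite HS, Hm. simpl. apply Z.divide_mul_r, Z.divide_refl.
  - apply Z.divide_mul_l, IH. lia.
Qed.

Lemma M_bound (up : nat -> nat) : (forall j, (1 <= j)%nat -> Rabs (uu j) <= s ^ up j) ->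
  forall n Qm, (1 <= n)%nat -> Rabs (IZR (Mprod n Qm)) <= s ^ (Aexp up n Qm).
Proof.
  intros Hup n Qm Hn. induction Qm as [|Qm IH].
  - simpl. rewrite Rabs_R1. lra.
  - cbn [Mprod Aexp]. rewrite mult_IZR, Rabs_mult, pow_add.
    apply Rmult_le_compat; [apply Rabs_pos| apply Rabs_pos| exact IH|].
    destruct (inS (S Qm) && Nat.eqb (n mod S Qm) 0) eqn:E.
    + rewrite IZR_U. apply Hup. apply andb_prop in E as [_ E]. apply Nat.eqb_eq in E.
      apply div_ge1; [exact Hn| lia| exact E].
    + simpl. rewrite Rabs_R1. lra.
Qed.

Lemma M_nz n Qm : (1 <= n)%nat -> Mprod n Qm <> 0%Z.
Proof.
  intros Hn. induction Qm as [|Qm IH]; cbn [Mprod]; [lia|].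
  apply Z.neq_mul_0. split; [exact IH|].
  destruct (inS (S Qm) && Nat.eqb (n mod S Qm) 0) eqn:E; [|lia].
  apply andb_prop in E as [_ E]. apply Nat.eqb_eq in E.
  apply Unz. apply div_ge1; [exact Hn| lia| exact E].
Qed.

Lemma pick_q (y : nat) : (2 <= y)%nat -> exists q, inS q = true /\ (y mod q)%nat = 0%nat /\ (1 <= q <= y)%nat.
Proof.
  intros Hy.
  destruct (Nat.eqb_spec ((y mod 2)%nat) 0) as [H2|H2].
  - exists 2%nat. split; [reflexivity| split; [exact H2| lia]].
  - destruct (Nat.eqb_spec ((y mod 3)%nat) 0) as [H3|H3].
    + exists 3%nat. split; [reflexivity| split; [exact H3|]].
      split; [lia|]. destruct (Nat.le_gt_cases 3 y); [lia|].
      assert (y = 2)%nat by lia. subst. simpl in H2. lia.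
    + exists y. split; [| split; [apply Nat.Div0.mod_same| lia]].
      unfold inS. apply Bool.orb_true_iff. right.
      apply Bool.andb_true_iff. split; [apply Nat.leb_le|].
      * destruct (Nat.le_gt_cases 5 y); [lia|].
        assert (Hy3 : (y = 2 \/ y = 3 \/ y = 4)%nat) by lia.
        destruct Hy3 as [Hy3|[Hy3|Hy3]]; subst y; simpl in *; lia.
      * apply Bool.orb_true_iff. rewrite !Nat.eqb_eq. lia.
Qed.

Lemma gcd_div_M j n : (1 <= j)%nat -> (j < n)%nat -> (Z.gcd (U j) (U n) | Mprod n n)%Z.
Proof.
  intros Hj Hjn.
  set (d := Nat.gcd j n).
  assert (Hx : (Z.gcd (U j) (U n) | U d)%Z).
  { apply U_strong; [exact hcop| apply Z.gcd_divide_l| apply Z.gcd_divide_r]. }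
  eapply Z.divide_trans; [exact Hx|].
  assert (Hdn : Nat.divide d n) by apply Nat.gcd_divide_r.
  assert (Hdj : Nat.divide d j) by apply Nat.gcd_divide_l.
  destruct Hdn as [y Hy].
  assert (Hd1 : (1 <= d)%nat).
  { destruct d eqn:Ed; [|lia]. exfalso. apply Nat.gcd_eq_0_l in Ed. lia. }
  assert (Hdle : (d <= j)%nat) by (apply Nat.divide_pos_le; [lia| exact Hdj]).
  assert (Hy2 : (2 <= y)%nat) by nia.
  destruct (pick_q y Hy2) as [q [HS [Hqy Hq]]].
  pose proof (Nat.div_mod_eq y q) as Ey. rewrite Hqy, Nat.add_0_r in Ey.
  set (z := (y / q)%nat) in *.
  assert (Hnq : (n / q)%nat = (z * d)%nat).
  { rewrite Hy, Ey. replace (q * z * d)%nat with (z * d * q)%nat by ring.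
    apply Nat.div_mul. lia. }
  assert (Hnm : (n mod q)%nat = 0%nat).
  { rewrite Hy, Ey. replace (q * z * d)%nat with (z * d * q)%nat by ring. apply Nat.Div0.mod_mul. }
  eapply Z.divide_trans; [apply (U_div_mult P Q d z)|].
  rewrite <- Hnq. apply M_div; [exact HS| exact Hnm|].
  split; [lia|]. rewrite Hy. nia.
Qed.

Lemma gL_div_M i n : (i < n)%nat -> (Z.gcd (L i) (U n) | Mprod n n)%Z.
Proof.
  induction i as [|i IH]; intros Hi.
  - change (lcm_lucas P Q 0) with 1%Z. rewrite Z.gcd_1_l. apply Z.divide_1_l.
  - rewrite L_succ. eapply Z.divide_trans; [apply Zgcd_lcm_distr|].
    apply Z.lcm_least; [apply IH; lia| apply gcd_div_M; lia].
Qed.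

Lemma low_step (up low : nat -> nat) :
  (forall j, (1 <= j)%nat -> Rabs (uu j) <= s ^ up j) ->
  (forall j, (1 <= j)%nat -> s ^ low j <= Rabs (uu j)) ->
  forall k, IZR (L k) * s ^ low (S k) <= IZR (L (S k)) * s ^ (Aexp up (S k) (S k)).
Proof.
  intros Hup Hlow k.
  pose proof (step_eq k) as E.
  set (g := Z.gcd (L k) (U (S k))) in *.
  assert (Hg : (g | Mprod (S k) (S k))%Z) by (apply gL_div_M; lia).
  assert (Hgpos : (0 < g)%Z).
  { pose proof (Z.gcd_nonneg (L k) (U (S k))). assert (g <> 0%Z).
    { intro H0. apply Z.gcd_eq_0 in H0 as [H0 _]. pose proof (L_pos k). lia. }
    fold g in H. lia. }
  assert (HgM : IZR g <= Rabs (IZR (Mprod (S k) (S k)))).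
  { rewrite <- abs_IZR. apply IZR_le. apply Z.divide_pos_le.
    - pose proof (M_nz (S k) (S k) ltac:(lia)). lia.
    - apply Z.divide_abs_r. exact Hg. }
  pose proof (M_bound up Hup (S k) (S k) ltac:(lia)) as HM.
  pose proof (Hlow (S k) ltac:(lia)) as HL.
  pose proof (L_pos (S k)) as HL1. pose proof (L_pos k) as HL0.
  apply IZR_lt in HL1. apply IZR_lt in HL0.
  apply Rle_trans with (IZR (L k) * Rabs (uu (S k))).
  - apply Rmult_le_compat_l; lra.
  - rewrite <- E. apply Rmult_le_compat_l; lra.
Qed.

Fixpoint Btot (low : nat -> nat) (n : nat) : nat :=
  match n with O => O | S n' => (Btot low n' + low n)%nat end.

Lemma lower_main (up low : nat -> nat) :
  (forall j, (1 <= j)%nat -> Rabs (uu j) <= s ^ up j) ->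
  (forall j, (1 <= j)%nat -> s ^ low j <= Rabs (uu j)) ->
  forall n, s ^ Btot low n <= IZR (L n) * s ^ Atot up n.
Proof.
  intros Hup Hlow n. induction n as [|n IH].
  - simpl. lra.
  - cbn [Btot Atot]. rewrite !pow_add.
    pose proof (low_step up low Hup Hlow n) as H.
    pose proof (spow_pos (low (S n))). pose proof (spow_pos (Btot low n)).
    pose proof (spow_pos (Atot up n)). pose proof (spow_pos (Aexp up (S n) (S n))).
    apply Rle_trans with (IZR (L n) * s ^ Atot up n * s ^ low (S n)).
    + apply Rmult_le_compat_r; lra.
    + replace (IZR (L n) * s ^ Atot up n * s ^ low (S n)) with (IZR (L n) * s ^ low (S n) * s ^ Atot up n) by ring.
      replace (IZR (L (S n)) * (s ^ Atot up n * s ^ Aexp up (S n) (S n))) with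
        (IZR (L (S n)) * s ^ Aexp up (S n) (S n) * s ^ Atot up n) by ring.
      apply Rmult_le_compat_r; lra.
Qed.

Lemma up_step k : IZR (L (S k)) ^ 6 <= IZR (L k) ^ 6 * s ^ (tt (S k)).
Proof.
  destruct (Nat.eq_dec k 0) as [->|Hk0]; [apply up_case1|].
  assert (Hc : ((S k) mod 6 = 0 \/ (S k) mod 6 = 1 \/ (S k) mod 6 = 2 \/ (S k) mod 6 = 3 \/ (S k) mod 6 = 4 \/ (S k) mod 6 = 5)%nat) by lia.
  destruct Hc as [H|[H|[H|[H|[H|H]]]]].
  - apply (up_case0 k ((S k) / 6)%nat). lia.
  - apply up_case15; [exact Hk0| left; exact H].
  - apply (up_case24 k ((S k) / 2)%nat); [lia| left; exact H].
  - apply (up_case3 k ((S k) / 3)%nat); [lia| exact H].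
  - apply (up_case24 k ((S k) / 2)%nat); [lia| right; exact H].
  - apply up_case15; [exact Hk0| right; exact H].
Qed.

Lemma L6 n : IZR (L n) ^ 6 <= s ^ (Gs n).
Proof.
  induction n as [|n IH].
  - simpl. lra.
  - cbn [Gs]. rewrite pow_add.
    pose proof (up_step n). pose proof (spow_pos (tt (S n))).
    eapply Rle_trans; [exact H|]. apply Rmult_le_compat_r; lra.
Qed.

Lemma upper_final n : (1 <= n)%nat ->
  IZR (L n) <= Rpower s ((INR n)^2 / 3 + 7 * INR n / 3 - 8 / 3).
Proof.
  intros Hn.
  pose proof (L6 n) as H6. pose proof (Gs_bound n Hn) as HG.
  pose proof (L_pos n) as HL. apply IZR_lt in HL.
  pose proof s_gt1 as Hs.
  assert (E1 : IZR (L n) = Rpower (IZR (L n) ^ 6) (1/6)).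
  { rewrite <- (Rpower_pow 6 (IZR (L n))) by exact HL. rewrite Rpower_mult.
    replace (INR 6 * (1/6)) with 1 by (simpl; field). rewrite Rpower_1 by exact HL. reflexivity. }
  assert (E2 : Rpower (s ^ Gs n) (1/6) = Rpower s (INR (Gs n) * (1/6))).
  { rewrite <- (Rpower_pow (Gs n) s) by lra. apply Rpower_mult. }
  rewrite E1. eapply Rle_trans.
  - apply Rle_Rpower_l; [lra| split; [apply pow_lt; exact HL| exact H6]].
  - rewrite E2. apply Rle_Rpower; [lra|].
    apply le_INR in HG. rewrite !plus_INR, !mult_INR in HG.
    replace (INR 16) with 16 in HG by (rewrite INR_IZR_INZ; reflexivity).
    replace (INR 14) with 14 in HG by (rewrite INR_IZR_INZ; reflexivity).
    replace (INR 2) with 2 in HG by (rewrite INR_IZR_INZ; reflexivity).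
    simpl pow. lra.
Qed.

Lemma Btot_P n : (2 * Btot (fun k => k - 1) n = n * n - n)%nat.
Proof. induction n as [|n IH]; [reflexivity|]. cbn [Btot]. nia. Qed.

Lemma Btot_N n : (1 <= n)%nat -> (2 * Btot (fun k => k - 2) n + 3 * n = n * n + 2)%nat.
Proof.
  induction n as [|n IH]; intros Hn; [lia|].
  destruct n as [|n]; [reflexivity|].
  specialize (IH ltac:(lia)). cbn [Btot] in *. nia.
Qed.

Lemma countP n : (1 <= n)%nat -> (4 * Atot upP n <= n * n + 4)%nat.
Proof.
  intros Hn. rewrite Atot_Sw.
  destruct (Nat.le_gt_cases n 80) as [H|H].
  - apply small_P. lia.
  - pose proof (bigP n ltac:(lia)) as HB.
    apply INR_le. rewrite plus_INR, !mult_INR.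
    replace (INR 4) with 4 by (rewrite INR_IZR_INZ; reflexivity). exact HB.
Qed.

Lemma countN n : (1 <= n)%nat -> (4 * Atot upN n + 4 * n <= n * n + 8)%nat.
Proof.
  intros Hn. rewrite Atot_Sw.
  destruct (Nat.le_gt_cases n 80) as [H|H].
  - apply small_N. lia.
  - pose proof (bigN n ltac:(lia)) as HB.
    apply INR_le. rewrite !plus_INR, !mult_INR.
    replace (INR 4) with 4 by (rewrite INR_IZR_INZ; reflexivity).
    replace (INR 8) with 8 by (rewrite INR_IZR_INZ; reflexivity). exact HB.
Qed.

Lemma lower_from (A B : nat) (e : R) : s ^ B <= IZR (L 0) * 1 -> True.
Proof. auto. Qed.

Lemma lower_conv n (A B : nat) (e : R) :
  s ^ B <= IZR (L n) * s ^ A -> e <= INR B - INR A -> Rpower s e <= IZR (L n).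
Proof.
  intros H He. pose proof s_gt1 as Hs.
  eapply Rle_trans; [apply Rle_Rpower; [lra| exact He]|].
  unfold Rminus. rewrite Rpower_plus, Rpower_Ropp, !Rpower_pow by lra.
  pose proof (spow_pos A). pose proof (spow_pos B).
  apply Rmult_le_reg_r with (s ^ A); [lra|].
  rewrite Rmult_assoc, Rinv_l by lra. lra.
Qed.

Lemma lower_final n : (1 <= n)%nat ->
  Rpower s ((INR n)^2 / 4 - INR n / 2 - 1) <= IZR (L n).
Proof.
  intros Hn. pose proof s_gt1 as Hs.
  destruct (Rlt_or_le 0 (alpha * be)) as [Hp|Hn'].
  - assert (Hup : forall j, (1 <= j)%nat -> Rabs (uu j) <= s ^ upP j).
    { intros j Hj. unfold upP. destruct (Nat.leb_spec j 1).
      + assert (j = 1)%nat by lia. subst j. rewrite uu1, Rabs_R1. simpl. lra.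
      + apply U_up. }
    assert (Hlow : forall j, (1 <= j)%nat -> s ^ (j - 1) <= Rabs (uu j)).
    { intros j Hj. pose proof (U_lowP j Hp Hj) as H.
      replace j with (S (j - 1)) in H at 1 by lia. simpl in H.
      apply Rmult_le_reg_l with s; [lra| exact H]. }
    pose proof (lower_main upP (fun k => k - 1)%nat Hup Hlow n) as HM.
    apply (lower_conv n _ _ _ HM).
    pose proof (Btot_P n) as HB. pose proof (countP n Hn) as HA.
    apply le_INR in HA. rewrite plus_INR, !mult_INR in HA.
    assert (HB2 : INR ((2 * Btot (fun k => k - 1) n + n)%nat) = INR ((n * n)%nat)) by (f_equal; nia).
    rewrite plus_INR, !mult_INR in HB2.
    replace (INR 4) with 4 in HA by (rewrite INR_IZR_INZ; reflexivity).
    replace (INR 2) with 2 in HB2 by (rewrite INR_IZR_INZ; reflexivity).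
    simpl pow. lra.
  - assert (Hn2 : alpha * be < 0) by (pose proof ab_nz; lra).
    assert (Hup : forall j, (1 <= j)%nat -> Rabs (uu j) <= s ^ upN j).
    { intros j Hj. unfold upN. pose proof (U_upN j Hn2 Hj) as H.
      replace j with (S (j - 1)) in H at 2 by lia. simpl in H.
      apply Rmult_le_reg_l with s; [lra| exact H]. }
    assert (Hlow : forall j, (1 <= j)%nat -> s ^ (j - 2) <= Rabs (uu j)).
    { intros j Hj. destruct (Nat.eq_dec j 1) as [->|Hj1].
      - rewrite uu1, Rabs_R1. simpl. lra.
      - pose proof (U_lowN j Hn2 Hj) as H.
        replace j with (S (S (j - 2))) in H at 1 by lia. simpl in H.
        apply Rmult_le_reg_l with (s * s); [nra| lra]. }
    pose proof (lower_main upN (fun k => k - 2)%nat Hup Hlow n) as HM.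
    apply (lower_conv n _ _ _ HM).
    pose proof (Btot_N n Hn) as HB. pose proof (countN n Hn) as HA.
    apply le_INR in HA. rewrite !plus_INR, !mult_INR in HA.
    apply (f_equal INR) in HB. rewrite !plus_INR, !mult_INR in HB.
    replace (INR 4) with 4 in HA by (rewrite INR_IZR_INZ; reflexivity).
    replace (INR 8) with 8 in HA by (rewrite INR_IZR_INZ; reflexivity).
    replace (INR 2) with 2 in HB by (rewrite INR_IZR_INZ; reflexivity).
    replace (INR 3) with 3 in HB by (rewrite INR_IZR_INZ; reflexivity).
    simpl pow. lra.
Qed.

End Main.

Theorem theorem2 (P Q : Z) (alpha : R)
  (hP : P <> 0%Z) (hQ : Q <> 0%Z) (hcop : Z.gcd P Q = 1%Z)
  (hDelta : (P * P - 4 * Q > 0)%Z)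
  (halpha : alpha * alpha - IZR P * alpha + IZR Q = 0)
  (hlargest : Rabs alpha > Rabs (IZR P - alpha))
  (n : nat) (hn : (1 <= n)%nat) :
  Rpower (Rabs alpha) ((INR n)^2 / 4 - INR n / 2 - 1) <= IZR (lcm_lucas P Q n) /\
  IZR (lcm_lucas P Q n) <= Rpower (Rabs alpha) ((INR n)^2 / 3 + 7 * INR n / 3 - 8 / 3).
Proof.
  split.
  - eapply lower_final; eassumption.
  - eapply upper_final; eassumption.
Qed.
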